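(* For every natural number $n$ and all $x,y,z\in\mathbb{R}$ such that $\sin\frac{x+y+2z}{2}$, $\sin\frac{x+y-2z}{2}$, $\sin\frac{x-y+2z}{2}$, $\sin\frac{x-y-2z}{2}$ are all nonzero, $$\Upsilon_n(x,y,z):=\sum_{j=0}^{n}\sin((j+1)x)\sin((j+1)y)\sin((2n-2j+3)z)$$ equals $$\frac{\cos\frac{x-y+(8+4n)z}{2}}{8\sin\frac{x-y-2z}{2}}-\frac{\cos\frac{(2n+3)(x-y)+4z}{2}}{8\sin\frac{x-y-2z}{2}}+\frac{\cos\frac{(2n+3)(x-y)-4z}{2}}{8\sin\frac{x-y+2z}{2}}-\frac{\cos\frac{x-y-(8+4n)z}{2}}{8\sin\frac{x-y+2z}{2}}$$ $$+\frac{\cos\frac{(2n+3)(x+y)+4z}{2}}{8\sin\frac{x+y-2z}{2}}-\frac{\cos\frac{x+y+(8+4n)z}{2}}{8\sin\frac{x+y-2z}{2}}+\frac{\cos\frac{x+y-(8+4n)z}{2}}{8\sin\frac{x+y+2z}{2}}-\frac{\cos\frac{(2n+3)(x+y)-4z}{2}}{8\sin\frac{x+y+2z}{2}}.$$ *)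

(* Defs.v *)
From Stdlib Require Import Reals.
Open Scope R_scope.

Definition Upsilon (n : nat) (x y z : R) : R :=
  sum_f_R0 (fun j => sin ((INR j + 1) * x) * sin ((INR j + 1) * y)
                     * sin ((2 * INR n - 2 * INR j + 3) * z)) n.

(* Main.v *)
Require Import Defs.
From Stdlib Require Import Reals Lra.
Open Scope R_scope.

Lemma two_sin_sin u v : 2 * sin u * sin v = cos (u - v) - cos (u + v).
Proof. rewrite cos_minus, cos_plus. ring. Qed.

Lemma sum_sin (a d : R) (n : nat) : sin (d / 2) <> 0 ->
  sum_f_R0 (fun j => sin (a + INR j * d)) n
  = (cos (a - d / 2) - cos (a + INR n * d + d / 2)) / (2 * sin (d / 2)).
Proof.
  intro Hd. induction n as [|n IH].
  - simpl. replace (a + 0 * d) with a by ring.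
    replace (a + 0 * d + d / 2) with (a + d/2) by ring.
    rewrite <- two_sin_sin. field. exact Hd.
  - cbn [sum_f_R0]. rewrite IH, S_INR.
    assert (E : sin (a + (INR n + 1) * d) =
      (cos (a + INR n * d + d / 2) - cos (a + (INR n + 1) * d + d / 2)) / (2 * sin (d / 2))).
    { replace (a + INR n * d + d / 2) with ((a + (INR n + 1) * d) - d/2) by field.
      rewrite <- two_sin_sin. field. exact Hd. }
    rewrite E. field. exact Hd.
Qed.

Lemma prod3 A B W : sin A * sin B * sin W =
  / 4 * (sin (W + (A - B)) - sin ((A - B) - W) - sin (W + (A + B)) + sin ((A + B) - W)).
Proof.
  repeat rewrite ?sin_plus, ?sin_minus, ?cos_plus, ?cos_minus. field.
Qed.

Lemma sum_lin (f g h k : nat -> R) n :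
  sum_f_R0 (fun j => / 4 * (f j - g j - h j + k j)) n =
  / 4 * (sum_f_R0 f n - sum_f_R0 g n - sum_f_R0 h n + sum_f_R0 k n).
Proof. induction n; simpl; [ring | rewrite IHn; ring]. Qed.

Theorem lemma11 (n : nat) (x y z : R) :
  sin ((x + y + 2 * z) / 2) <> 0 ->
  sin ((x + y - 2 * z) / 2) <> 0 ->
  sin ((x - y + 2 * z) / 2) <> 0 ->
  sin ((x - y - 2 * z) / 2) <> 0 ->
  Upsilon n x y z =
    cos ((x - y + (8 + 4 * INR n) * z) / 2) / (8 * sin ((x - y - 2 * z) / 2))
  - cos (((2 * INR n + 3) * (x - y) + 4 * z) / 2) / (8 * sin ((x - y - 2 * z) / 2))
  + cos (((2 * INR n + 3) * (x - y) - 4 * z) / 2) / (8 * sin ((x - y + 2 * z) / 2))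
  - cos ((x - y - (8 + 4 * INR n) * z) / 2) / (8 * sin ((x - y + 2 * z) / 2))
  + cos (((2 * INR n + 3) * (x + y) + 4 * z) / 2) / (8 * sin ((x + y - 2 * z) / 2))
  - cos ((x + y + (8 + 4 * INR n) * z) / 2) / (8 * sin ((x + y - 2 * z) / 2))
  + cos ((x + y - (8 + 4 * INR n) * z) / 2) / (8 * sin ((x + y + 2 * z) / 2))
  - cos (((2 * INR n + 3) * (x + y) - 4 * z) / 2) / (8 * sin ((x + y + 2 * z) / 2)).
Proof.
  intros H4 H3 H2 H1.
  unfold Upsilon.
  rewrite (sum_eq _ (fun j => / 4 *
     (sin (((2 * INR n + 3) * z + (x - y)) + INR j * (x - y - 2 * z))
    - sin (((x - y) - (2 * INR n + 3) * z) + INR j * (x - y + 2 * z))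
    - sin (((2 * INR n + 3) * z + (x + y)) + INR j * (x + y - 2 * z))
    + sin (((x + y) - (2 * INR n + 3) * z) + INR j * (x + y + 2 * z))))).
  2:{ intros j _. rewrite prod3. f_equal. f_equal; [f_equal; [f_equal|] |]; f_equal; ring. }
  rewrite sum_lin, !sum_sin by assumption.
  replace ((2 * INR n + 3) * z + (x - y) - (x - y - 2 * z) / 2)
    with ((x - y + (8 + 4 * INR n) * z) / 2) by field.
  replace ((2 * INR n + 3) * z + (x - y) + INR n * (x - y - 2 * z) + (x - y - 2 * z) / 2)
    with (((2 * INR n + 3) * (x - y) + 4 * z) / 2) by field.
  replace (x - y - (2 * INR n + 3) * z - (x - y + 2 * z) / 2)
    with ((x - y - (8 + 4 * INR n) * z) / 2) by field.
  replace (x - y - (2 * INR n + 3) * z + INR n * (x - y + 2 * z) + (x - y + 2 * z) / 2)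
    with (((2 * INR n + 3) * (x - y) - 4 * z) / 2) by field.
  replace ((2 * INR n + 3) * z + (x + y) - (x + y - 2 * z) / 2)
    with ((x + y + (8 + 4 * INR n) * z) / 2) by field.
  replace ((2 * INR n + 3) * z + (x + y) + INR n * (x + y - 2 * z) + (x + y - 2 * z) / 2)
    with (((2 * INR n + 3) * (x + y) + 4 * z) / 2) by field.
  replace (x + y - (2 * INR n + 3) * z - (x + y + 2 * z) / 2)
    with ((x + y - (8 + 4 * INR n) * z) / 2) by field.
  replace (x + y - (2 * INR n + 3) * z + INR n * (x + y + 2 * z) + (x + y + 2 * z) / 2)
    with (((2 * INR n + 3) * (x + y) - 4 * z) / 2) by field.
  field. repeat split; assumption.
Qed.
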